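(* At iteration $\ell$ of the procedure, suppose $Z_{X,\ell}\in\mathbb{S}^r_{++}$, $Z_{S,\ell}\in\mathbb{S}^{n-r}_{--}$ (negative definite), and $\|Z_{O,\ell}\|_2\le\frac{3}{4\eta_\ell}$. Then the Sylvester equation $W_O Z_{X,\ell}+(-Z_{S,\ell})W_O=Z_{O,\ell}$ has a unique solution $W_{O,\ell}$ satisfying $\|W_{O,\ell}\|_2\le\eta_\ell\|Z_{O,\ell}\|_2$. Moreover, \begin{align*} &\max\{\|Z_{X,\ell+1}-Z_{X,\ell}\|_2,\ \|Z_{S,\ell+1}-Z_{S,\ell}\|_2,\ \|Z_{O,\ell+1}\|_2\}\\ \le\ &\Big(\tfrac{4}{9}\eta_\ell^4\|Z_0\|_2^3+\tfrac{4}{3}\eta_\ell^3\|Z_0\|_2^2+\tfrac{13}{3}\eta_\ell^2\|Z_0\|_2+4\eta_\ell\Big)\|Z_{O,\ell}\|_2^2 \end{align*} for all $\ell\in\mathbb{N}$.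
   Context: Let $Z=\mathrm{diag}(\lambda_1,\dots,\lambda_n)\in\mathbb{S}^n$ be nonsingular with $\lambda_1\ge\dots\ge\lambda_r>0>\lambda_{r+1}\ge\dots\ge\lambda_n$, and let $H\in\mathbb{S}^n$ be a perturbation. The iterative elimination procedure starts with $Z_0=\begin{bmatrix}Z_{X,0}&Z_{O,0}^{\mathsf T}\\ Z_{O,0}&Z_{S,0}\end{bmatrix}:=Z+H$ (blocks $Z_{X,\ell}\in\mathbb{S}^r$, $Z_{S,\ell}\in\mathbb{S}^{n-r}$, $Z_{O,\ell}\in\mathbb{R}^{(n-r)\times r}$). At iteration $\ell$ it solves $W_O Z_{X,\ell}+(-Z_{S,\ell})W_O=Z_{O,\ell}$ for $W_{O,\ell}$, sets the skew-symmetric matrix $W_\ell=\begin{bmatrix}0&-W_{O,\ell}^{\mathsf T}\\ W_{O,\ell}&0\end{bmatrix}$, and updates $Z_{\ell+1}=\begin{bmatrix}Z_{X,\ell+1}&Z_{O,\ell+1}^{\mathsf T}\\ Z_{O,\ell+1}&Z_{S,\ell+1}\end{bmatrix}:=\exp(W_\ell)^{\mathsf T}Z_\ell\exp(W_\ell)$. Define $d=\sqrt{\min\{r,n-r\}}$ and $\eta_\ell=\dfrac{d}{\lambda_{\min}(Z_{X,\ell})-\lambda_{\max}(Z_{S,\ell})}$. *)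

(* Defs.v *)
From HB Require Import structures.
From mathcomp Require Import all_boot all_order all_algebra.
From mathcomp Require Import all_classical all_reals all_analysis.
Set Implicit Arguments. Unset Strict Implicit. Unset Printing Implicit Defensive.
Import Order.TTheory GRing.Theory Num.Theory.
Local Open Scope ring_scope.
Import numFieldNormedType.Exports.
Local Open Scope classical_set_scope.

Section Defs.
Variable R : realType.

Definition vnorm {m : nat} (v : 'cV[R]_m) : R := Num.sqrt (\sum_i v i 0 ^+ 2).

Definition spnorm {m p : nat} (A : 'M[R]_(m, p)) : R :=
  sup [set vnorm (A *m x) | x in [set x : 'cV[R]_p | vnorm x = 1]].

Definition expm {m : nat} (W : 'M[R]_m) : 'M[R]_m :=
  \matrix_(i, j) limn ((fun N => (\sum_(k < N) (k`!%:R)^-1 *: W ^+ k) i j) : R^nat).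

Definition symmx {m : nat} (A : 'M[R]_m) : Prop := A^T = A.
Definition posdef {m : nat} (A : 'M[R]_m) : Prop :=
  symmx A /\ forall x : 'cV[R]_m, x != 0 -> 0 < (x^T *m A *m x) 0 0.
Definition negdef {m : nat} (A : 'M[R]_m) : Prop :=
  symmx A /\ forall x : 'cV[R]_m, x != 0 -> (x^T *m A *m x) 0 0 < 0.

Definition lambda_min {m : nat} (A : 'M[R]_m) : R := inf [set a : R | eigenvalue A a].
Definition lambda_max {m : nat} (A : 'M[R]_m) : R := sup [set a : R | eigenvalue A a].

(* blocks of a (r+s)x(r+s) matrix: Z = [Z_X Z_O^T; Z_O Z_S] *)
Definition ZX {r s : nat} (Z : 'M[R]_(r + s)) : 'M[R]_r := ulsubmx Z.
Definition ZS {r s : nat} (Z : 'M[R]_(r + s)) : 'M[R]_s := drsubmx Z.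
Definition ZO {r s : nat} (Z : 'M[R]_(r + s)) : 'M[R]_(s, r) := dlsubmx Z.

Definition etaZ {r s : nat} (Z : 'M[R]_(r + s)) : R :=
  Num.sqrt (minn r s)%:R / (lambda_min (ZX Z) - lambda_max (ZS Z)).

Definition sylv {r s : nat} (Z : 'M[R]_(r + s)) (WO : 'M[R]_(s, r)) : Prop :=
  WO *m ZX Z + (- ZS Z) *m WO = ZO Z.

Definition Wmat {r s : nat} (WO : 'M[R]_(s, r)) : 'M[R]_(r + s) :=
  block_mx 0 (- WO^T) WO 0.

Definition step {r s : nat} (Z : 'M[R]_(r + s)) (WO : 'M[R]_(s, r)) : 'M[R]_(r + s) :=
  (expm (Wmat WO))^T *m Z *m expm (Wmat WO).

End Defs.

(* Main.v *)
Require Import Defs.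
From HB Require Import structures.
From mathcomp Require Import all_boot all_order all_algebra.
From mathcomp Require Import all_classical all_reals all_analysis.
From mathcomp Require Import ring lra.
Import Order.TTheory GRing.Theory Num.Theory.
Local Open Scope ring_scope.
Import numFieldNormedType.Exports.
Local Open Scope classical_set_scope.
Set Implicit Arguments. Unset Strict Implicit. Unset Printing Implicit Defensive.

Section P1.
Variable R : realType.

Lemma CS (I : finType) (u v : I -> R) :
  (\sum_i u i * v i) ^+ 2 <= (\sum_i u i ^+ 2) * (\sum_i v i ^+ 2).
Proof.
set A := \sum_i u i ^+ 2; set B := \sum_i v i ^+ 2; set C := \sum_i u i * v i.
have A0 : 0 <= A by apply: sumr_ge0 => i _; exact: sqr_ge0.
have E : \sum_i (A * v i - C * u i) ^+ 2 = A * (A * B - C ^+ 2).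
  rewrite (eq_bigr (fun i => A ^+ 2 * v i ^+ 2 - (2 * A * C) * (u i * v i)
      + C ^+ 2 * u i ^+ 2)); last by move=> i _; ring.
  rewrite big_split /= sumrB -!mulr_sumr -/A -/B -/C; ring.
have H : 0 <= A * (A * B - C ^+ 2).
  by rewrite -E; apply: sumr_ge0 => i _; exact: sqr_ge0.
have [Ap|] := ltrP 0 A.
  by rewrite -subr_ge0 -(pmulr_rge0 _ Ap).
move=> Ale; have A00 : A = 0 by apply/eqP; rewrite eq_le Ale A0.
have u0 : forall i, u i = 0.
  move=> i; apply/eqP; rewrite -sqrf_eq0; apply/eqP.
  by move: A00 => /psumr_eq0P => /(_ (fun i _ => sqr_ge0 (u i))) ->.
have -> : C = 0 by rewrite /C big1 // => i _; rewrite u0 mul0r.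
by rewrite expr0n /= mulr_ge0 // /B sumr_ge0 // => i _; exact: sqr_ge0.
Qed.

Definition nsq {m} (v : 'cV[R]_m) : R := \sum_i v i 0 ^+ 2.

Lemma nsq_ge0 m (v : 'cV[R]_m) : 0 <= nsq v.
Proof. by apply: sumr_ge0 => i _; exact: sqr_ge0. Qed.

Lemma vnormE m (v : 'cV[R]_m) : vnorm v = Num.sqrt (nsq v).
Proof. by []. Qed.

Lemma vnorm_ge0 m (v : 'cV[R]_m) : 0 <= vnorm v.
Proof. exact: sqrtr_ge0. Qed.

Lemma vnorm_sq m (v : 'cV[R]_m) : vnorm v ^+ 2 = nsq v.
Proof. by rewrite vnormE sqr_sqrtr // nsq_ge0. Qed.

Lemma nsq_eq0 m (v : 'cV[R]_m) : nsq v = 0 -> v = 0.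
Proof.
move=> /psumr_eq0P H; apply/matrixP => i j; rewrite ord1 mxE.
by apply/eqP; rewrite -sqrf_eq0; apply/eqP; apply: H => // k _; exact: sqr_ge0.
Qed.

Lemma vnorm_eq0 m (v : 'cV[R]_m) : vnorm v = 0 -> v = 0.
Proof. by move=> H; apply: nsq_eq0; rewrite -vnorm_sq H expr0n. Qed.

Lemma nsq0 m : nsq (0 : 'cV[R]_m) = 0.
Proof. by rewrite /nsq big1 // => i _; rewrite mxE expr0n. Qed.

Lemma vnorm0 m : vnorm (0 : 'cV[R]_m) = 0.
Proof. by rewrite vnormE nsq0 sqrtr0. Qed.

Lemma nsqZ m (a : R) (v : 'cV[R]_m) : nsq (a *: v) = a ^+ 2 * nsq v.
Proof. by rewrite /nsq mulr_sumr; apply: eq_bigr => i _; rewrite mxE exprMn. Qed.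

Lemma vnormZ m (a : R) (v : 'cV[R]_m) : vnorm (a *: v) = `|a| * vnorm v.
Proof. by rewrite !vnormE nsqZ sqrtrM ?sqr_ge0 // sqrtr_sqr. Qed.

Lemma le_sq (a b : R) : 0 <= b -> a ^+ 2 <= b ^+ 2 -> a <= b.
Proof. move=> b0 H; nra. Qed.

Lemma entry_le m (v : 'cV[R]_m) i : `|v i 0| <= vnorm v.
Proof.
apply: le_sq; first exact: vnorm_ge0.
rewrite vnorm_sq real_normK ?num_real // /nsq (bigD1 i) //= lerDl.
by apply: sumr_ge0 => k _; exact: sqr_ge0.
Qed.

Definition dotv {m} (u v : 'cV[R]_m) : R := \sum_i u i 0 * v i 0.

Lemma dotv_le m (u v : 'cV[R]_m) : dotv u v <= vnorm u * vnorm v.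
Proof.
have h0 : 0 <= vnorm u * vnorm v by rewrite mulr_ge0 // vnorm_ge0.
apply: le_sq => //; rewrite exprMn !vnorm_sq; exact: CS.
Qed.

Lemma nsqD m (u v : 'cV[R]_m) : nsq (u + v) = nsq u + 2 * dotv u v + nsq v.
Proof.
rewrite /nsq /dotv mulr_sumr -!big_split /=; apply: eq_bigr => i _.
rewrite mxE; ring.
Qed.

Lemma vnormD m (u v : 'cV[R]_m) : vnorm (u + v) <= vnorm u + vnorm v.
Proof.
apply: le_sq; first by rewrite addr_ge0 // vnorm_ge0.
rewrite vnorm_sq nsqD -!vnorm_sq; have := dotv_le u v; nra.
Qed.

Lemma mulmx_entry m n (A : 'M[R]_(m, n)) (x : 'cV[R]_n) i :
  (A *m x) i 0 = \sum_j A i j * x j 0.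
Proof. by rewrite mxE. Qed.

Definition frob2 {m n} (A : 'M[R]_(m, n)) : R := \sum_i \sum_j A i j ^+ 2.

Lemma frob2_ge0 m n (A : 'M[R]_(m, n)) : 0 <= frob2 A.
Proof. by apply: sumr_ge0 => i _; apply: sumr_ge0 => j _; exact: sqr_ge0. Qed.

Lemma nsq_mul_frob m n (A : 'M[R]_(m, n)) (x : 'cV[R]_n) :
  nsq (A *m x) <= frob2 A * nsq x.
Proof.
rewrite /nsq /frob2 mulr_suml; apply: ler_sum => i _.
rewrite mulmx_entry; exact: CS.
Qed.

Definition spset {m n} (A : 'M[R]_(m, n)) :=
  [set vnorm (A *m x) | x in [set x : 'cV[R]_n | vnorm x = 1]].

Lemma spnormE m n (A : 'M[R]_(m, n)) : spnorm A = sup (spset A).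
Proof. by []. Qed.

Lemma spset_ub m n (A : 'M[R]_(m, n)) : has_ubound (spset A).
Proof.
exists (Num.sqrt (frob2 A)) => y; rewrite /spset /= => -[x x1 <-].
rewrite vnormE ler_sqrt ?mulr_ge0 ?frob2_ge0 //.
by apply: le_trans (nsq_mul_frob A x) _; rewrite -vnorm_sq x1 expr1n mulr1.
Qed.

Lemma spnorm_ge0 m n (A : 'M[R]_(m, n)) : 0 <= spnorm A.
Proof.
rewrite spnormE; have [[y [x /= x1 xy]]|ne] := pselect (spset A !=set0).
  apply: le_trans (vnorm_ge0 (A *m x)) _; apply: ub_le_sup; first exact: spset_ub.
  by exists x.
have -> : spset A = set0.
  by apply/seteqP; split => // y Ay; apply: ne; exists y.
by rewrite sup0.
Qed.

Lemma spnorm_ub m n (A : 'M[R]_(m, n)) x : vnorm (A *m x) <= spnorm A * vnorm x.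
Proof.
have [->|x0] := eqVneq x 0; first by rewrite mulmx0 !vnorm0 mulr0.
have t0 : 0 < vnorm x.
  rewrite lt_def vnorm_ge0 andbT; apply/eqP => /vnorm_eq0 H; by rewrite H eqxx in x0.
have u1 : vnorm ((vnorm x)^-1 *: x) = 1.
  by rewrite vnormZ ger0_norm ?invr_ge0 ?vnorm_ge0 // mulVf // gt_eqF.
have : vnorm (A *m ((vnorm x)^-1 *: x)) <= spnorm A.
  by rewrite spnormE; apply: ub_le_sup; [exact: spset_ub | exists ((vnorm x)^-1 *: x)].
rewrite -scalemxAr vnormZ ger0_norm ?invr_ge0 ?vnorm_ge0 //.
by rewrite mulrC -ler_pdivlMr ?invr_gt0 // invrK.
Qed.

Lemma spnorm_le m n (A : 'M[R]_(m, n)) c :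
  0 <= c -> (forall x, vnorm (A *m x) <= c * vnorm x) -> spnorm A <= c.
Proof.
move=> c0 H; rewrite spnormE.
have [ne|ne] := pselect (spset A !=set0).
  by apply: ge_sup => // _ [x /= x1 <-]; rewrite -[c]mulr1 -x1.
have -> : spset A = set0.
  by apply/seteqP; split => // y Ay; apply: ne; exists y.
by rewrite sup0.
Qed.

Lemma spnorm_entry m n (A : 'M[R]_(m, n)) i j : `|A i j| <= spnorm A.
Proof.
pose x : 'cV[R]_n := delta_mx j 0.
have x1 : vnorm x = 1.
  rewrite vnormE /nsq (bigD1 j) //= big1 ?addr0; last first.
    by move=> k kj; rewrite mxE (negbTE kj) /= expr0n.
  by rewrite mxE !eqxx /= expr1n sqrtr1.
have -> : A i j = (A *m x) i 0.
  rewrite mxE (bigD1 j) //= big1 ?addr0; last first.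
    by move=> k kj; rewrite mxE (negbTE kj) /= mulr0.
  by rewrite mxE !eqxx mulr1.
by apply: le_trans (entry_le _ _) _; rewrite -[spnorm A]mulr1 -x1 spnorm_ub.
Qed.

Lemma spnormD m n (A B : 'M[R]_(m, n)) : spnorm (A + B) <= spnorm A + spnorm B.
Proof.
apply: spnorm_le; first by rewrite addr_ge0 // spnorm_ge0.
move=> x; rewrite mulmxDl mulrDl; apply: le_trans (vnormD _ _) _.
by rewrite lerD // spnorm_ub.
Qed.

Lemma spnormZ m n (a : R) (A : 'M[R]_(m, n)) : spnorm (a *: A) <= `|a| * spnorm A.
Proof.
apply: spnorm_le; first by rewrite mulr_ge0 // spnorm_ge0.
by move=> x; rewrite -scalemxAl vnormZ -mulrA ler_wpM2l // spnorm_ub.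
Qed.

Lemma spnormN m n (A : 'M[R]_(m, n)) : spnorm (- A) = spnorm A.
Proof.
have H : forall B : 'M[R]_(m, n), spnorm (- B) <= spnorm B.
  by move=> B; rewrite -scaleN1r; apply: le_trans (spnormZ _ _) _; rewrite normrN normr1 mul1r.
by apply/eqP; rewrite eq_le H /= -{1}(opprK A) H.
Qed.

Lemma spnormB m n (A B : 'M[R]_(m, n)) : spnorm (A - B) <= spnorm A + spnorm B.
Proof. by apply: le_trans (spnormD _ _) _; rewrite spnormN. Qed.

Lemma spnormM m n p (A : 'M[R]_(m, n)) (B : 'M[R]_(n, p)) :
  spnorm (A *m B) <= spnorm A * spnorm B.
Proof.
apply: spnorm_le; first by rewrite mulr_ge0 // spnorm_ge0.
move=> x; rewrite -mulmxA; apply: le_trans (spnorm_ub _ _) _.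
by rewrite -mulrA ler_wpM2l ?spnorm_ge0 // spnorm_ub.
Qed.

Lemma spnorm0 m n : spnorm (0 : 'M[R]_(m, n)) = 0.
Proof.
apply/eqP; rewrite eq_le spnorm_ge0 andbT; apply: spnorm_le => // x.
by rewrite mul0mx vnorm0 mul0r.
Qed.

Lemma spnorm1 m : spnorm (1%:M : 'M[R]_m) <= 1.
Proof. by apply: spnorm_le => // x; rewrite mul1mx mul1r. Qed.

Lemma spnorm_sum (I : Type) (s : seq I) (P : pred I) m n (F : I -> 'M[R]_(m, n)) :
  spnorm (\sum_(i <- s | P i) F i) <= \sum_(i <- s | P i) spnorm (F i).
Proof.
elim/big_rec2 : _ => [|i y1 y2 _ H]; first by rewrite spnorm0.
by apply: le_trans (spnormD _ _) _; rewrite lerD2l.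
Qed.

Lemma spnormX m (W : 'M[R]_m) k : spnorm (W ^+ k) <= spnorm W ^+ k.
Proof.
elim: k => [|k IH]; first by rewrite expr0 expr0 spnorm1.
rewrite exprS exprS -mulmxE; apply: le_trans (spnormM _ _) _.
by rewrite ler_wpM2l ?spnorm_ge0.
Qed.

Lemma dotv_tr m (u v : 'cV[R]_m) : dotv u v = (u^T *m v) 0 0.
Proof. by rewrite mxE; apply: eq_bigr => i _; rewrite mxE. Qed.

Lemma nsq_tr m (u : 'cV[R]_m) : nsq u = (u^T *m u) 0 0.
Proof. by rewrite -dotv_tr /nsq /dotv; apply: eq_bigr => i _; rewrite expr2. Qed.

Lemma sq_le_mul (a b : R) : 0 <= a -> 0 <= b -> a ^+ 2 <= a * b -> a <= b.
Proof.
move=> a0 b0 H; have [->|ap] := eqVneq a 0; first by [].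
have ap' : 0 < a by rewrite lt_def ap a0.
by rewrite -(ler_pM2l ap') -expr2.
Qed.

Lemma spnorm_tr_le m n (A : 'M[R]_(m, n)) : spnorm A^T <= spnorm A.
Proof.
apply: spnorm_le; first exact: spnorm_ge0.
move=> y; apply: sq_le_mul; [exact: vnorm_ge0| by rewrite mulr_ge0 ?spnorm_ge0 ?vnorm_ge0|].
rewrite vnorm_sq nsq_tr trmx_mul trmxK -mulmxA -dotv_tr.
apply: le_trans (dotv_le _ _) _.
apply: le_trans (ler_wpM2l (vnorm_ge0 y) (spnorm_ub A (A^T *m y))) _.
by rewrite le_eqVlt; apply/orP; left; apply/eqP; ring.
Qed.

Lemma spnorm_tr m n (A : 'M[R]_(m, n)) : spnorm A^T = spnorm A.
Proof.
by apply/eqP; rewrite eq_le spnorm_tr_le /= -{1}(trmxK A) spnorm_tr_le.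
Qed.

Lemma vnorm_orth m (Q : 'M[R]_m) x : Q^T *m Q = 1%:M -> vnorm (Q *m x) = vnorm x.
Proof.
move=> HQ; rewrite !vnormE !nsq_tr trmx_mul -mulmxA (mulmxA Q^T) HQ mul1mx //.
Qed.

End P1.

Section P2.
Variable R : realType.

Lemma nsq_col m n (u : 'cV[R]_m) (d : 'cV[R]_n) : nsq (col_mx u d) = nsq u + nsq d.
Proof.
rewrite /nsq big_split_ord /=; congr (_ + _); apply: eq_bigr => i _.
  by rewrite col_mxEu.
by rewrite col_mxEd.
Qed.

Lemma vnorm_col0 m n (u : 'cV[R]_m) : vnorm (col_mx u (0 : 'cV[R]_n)) = vnorm u.
Proof. by rewrite !vnormE nsq_col nsq0 addr0. Qed.

Lemma vnorm_col0' m n (u : 'cV[R]_n) : vnorm (col_mx (0 : 'cV[R]_m) u) = vnorm u.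
Proof. by rewrite !vnormE nsq_col nsq0 add0r. Qed.

Lemma vnorm_usub m n (v : 'cV[R]_(m + n)) : vnorm (usubmx v) <= vnorm v.
Proof.
rewrite -{2}(vsubmxK v) !vnormE nsq_col ler_sqrt ?addr_ge0 ?nsq_ge0 //.
by rewrite lerDl nsq_ge0.
Qed.

Lemma vnorm_dsub m n (v : 'cV[R]_(m + n)) : vnorm (dsubmx v) <= vnorm v.
Proof.
rewrite -{2}(vsubmxK v) !vnormE nsq_col ler_sqrt ?addr_ge0 ?nsq_ge0 //.
by rewrite lerDr nsq_ge0.
Qed.

Lemma spnorm_ul m1 m2 n1 n2 (M : 'M[R]_(m1 + m2, n1 + n2)) :
  spnorm (ulsubmx M) <= spnorm M.
Proof.
apply: spnorm_le; first exact: spnorm_ge0.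
move=> x; have -> : ulsubmx M *m x = usubmx (M *m col_mx x 0).
  by rewrite -{2}(submxK M) mul_block_col !mulmx0 !addr0 col_mxKu.
by apply: le_trans (vnorm_usub _) _; rewrite -[vnorm x](@vnorm_col0 _ n2 x) spnorm_ub.
Qed.

Lemma spnorm_ur m1 m2 n1 n2 (M : 'M[R]_(m1 + m2, n1 + n2)) :
  spnorm (ursubmx M) <= spnorm M.
Proof.
apply: spnorm_le; first exact: spnorm_ge0.
move=> x; have -> : ursubmx M *m x = usubmx (M *m col_mx 0 x).
  by rewrite -{2}(submxK M) mul_block_col !mulmx0 !add0r col_mxKu.
by apply: le_trans (vnorm_usub _) _; rewrite -[vnorm x](@vnorm_col0' n1 _ x) spnorm_ub.
Qed.

Lemma spnorm_dl m1 m2 n1 n2 (M : 'M[R]_(m1 + m2, n1 + n2)) :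
  spnorm (dlsubmx M) <= spnorm M.
Proof.
apply: spnorm_le; first exact: spnorm_ge0.
move=> x; have -> : dlsubmx M *m x = dsubmx (M *m col_mx x 0).
  by rewrite -{2}(submxK M) mul_block_col !mulmx0 !addr0 col_mxKd.
by apply: le_trans (vnorm_dsub _) _; rewrite -[vnorm x](@vnorm_col0 _ n2 x) spnorm_ub.
Qed.

Lemma spnorm_dr m1 m2 n1 n2 (M : 'M[R]_(m1 + m2, n1 + n2)) :
  spnorm (drsubmx M) <= spnorm M.
Proof.
apply: spnorm_le; first exact: spnorm_ge0.
move=> x; have -> : drsubmx M *m x = dsubmx (M *m col_mx 0 x).
  by rewrite -{2}(submxK M) mul_block_col !mulmx0 !add0r col_mxKd.
by apply: le_trans (vnorm_dsub _) _; rewrite -[vnorm x](@vnorm_col0' n1 _ x) spnorm_ub.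
Qed.

Lemma spnorm_Wmat r s (WO : 'M[R]_(s, r)) : spnorm (Wmat WO) <= spnorm WO.
Proof.
apply: spnorm_le; first exact: spnorm_ge0.
move=> x; rewrite -(vsubmxK x) /Wmat mul_block_col !mul0mx add0r addr0.
apply: le_sq; first by rewrite mulr_ge0 ?spnorm_ge0 ?vnorm_ge0.
rewrite exprMn !vnorm_sq !nsq_col mulrDr -!vnorm_sq.
have h1 := spnorm_ub (- WO^T) (dsubmx x); have h2 := spnorm_ub WO (usubmx x).
rewrite spnormN spnorm_tr in h1.
have := vnorm_ge0 (- WO^T *m dsubmx x); have := vnorm_ge0 (WO *m usubmx x).
have := spnorm_ge0 WO; have := vnorm_ge0 (usubmx x); have := vnorm_ge0 (dsubmx x).
nra.
Qed.

Definition mxcvg {m n} (A : nat -> 'M[R]_(m, n)) (L : 'M[R]_(m, n)) :=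
  forall i j, (fun N => A N i j) @ \oo --> L i j.

Lemma mxcvg_cst m n (L : 'M[R]_(m, n)) : mxcvg (fun=> L) L.
Proof. by move=> i j /=; apply: cvg_cst. Qed.

Lemma mxcvgD m n (A B : nat -> 'M[R]_(m, n)) L M :
  mxcvg A L -> mxcvg B M -> mxcvg (fun N => A N + B N) (L + M).
Proof.
move=> hA hB i j; rewrite mxE.
have -> : (fun N => (A N + B N) i j) = (fun N => A N i j) + (fun N => B N i j).
  by apply/funext => N; rewrite !mxE.
exact: cvgD.
Qed.

Lemma mxcvgN m n (A : nat -> 'M[R]_(m, n)) L :
  mxcvg A L -> mxcvg (fun N => - A N) (- L).
Proof.
move=> hA i j; rewrite mxE.
have -> : (fun N => (- A N) i j) = - (fun N => A N i j).
  by apply/funext => N; rewrite !mxE.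
exact: cvgN.
Qed.

Lemma mxcvg_tr m n (A : nat -> 'M[R]_(m, n)) L :
  mxcvg A L -> mxcvg (fun N => (A N)^T) L^T.
Proof.
move=> hA i j; rewrite mxE.
have -> : (fun N => (A N)^T i j) = (fun N => A N j i).
  by apply/funext => N; rewrite !mxE.
exact: hA.
Qed.

Lemma mxcvgM m n p (A : nat -> 'M[R]_(m, n)) (B : nat -> 'M[R]_(n, p)) L M :
  mxcvg A L -> mxcvg B M -> mxcvg (fun N => A N *m B N) (L *m M).
Proof.
move=> hA hB i j; rewrite mxE.
have -> : (fun N => (A N *m B N) i j) = (fun N => \sum_k (A N i k * B N k j)).
  by apply/funext => N; rewrite !mxE.
apply: (@cvg_big R 'I_n +%R 0 xpredT add_continuous nat \oo (index_enum _)
  (fun k N => A N i k * B N k j) (fun k => L i k * M k j)) => // k _.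
exact: cvgM.
Qed.

Lemma mxcvg_uniq m n (A : nat -> 'M[R]_(m, n)) L M :
  mxcvg A L -> mxcvg A M -> L = M.
Proof.
move=> hL hM; apply/matrixP => i j.
by rewrite -(cvg_lim _ (hL i j)) // -(cvg_lim _ (hM i j)).
Qed.

Lemma cvg_le_const (f : nat -> R) l b N0 :
  f @ \oo --> l -> (forall N, (N0 <= N)%N -> f N <= b) -> l <= b.
Proof.
move=> hf hb; rewrite -(cvg_lim _ hf) //; apply: limr_le; first exact: (cvgP l).
by exists N0 => // N /= hN; exact: hb.
Qed.

Lemma mxcvg_vnorm_le m n (A : nat -> 'M[R]_(m, n)) L x b N0 :
  mxcvg A L -> (forall N, (N0 <= N)%N -> vnorm (A N *m x) <= b) ->
  vnorm (L *m x) <= b.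
Proof.
move=> hA hb.
have b0 : 0 <= b by apply: le_trans (vnorm_ge0 _) (hb N0 (leqnn _)).
have hx := mxcvgM hA (mxcvg_cst (L:=x)).
apply: le_sq => //; rewrite vnorm_sq.
have hn : (fun N => nsq (A N *m x)) @ \oo --> nsq (L *m x).
  rewrite /nsq.
  apply: (@cvg_big R _ +%R 0 xpredT add_continuous nat \oo (index_enum _)
    (fun k N => (A N *m x) k 0 ^+ 2) (fun k => (L *m x) k 0 ^+ 2)) => // k _.
  rewrite expr2.
  have -> : (fun N => (A N *m x) k 0 ^+ 2) = (fun N => (A N *m x) k 0) \* (fun N => (A N *m x) k 0).
    by apply/funext => N; rewrite /= expr2.
  exact: cvgM.
apply: (cvg_le_const hn) => N hN; rewrite -vnorm_sq.
have := hb N hN; have := vnorm_ge0 (A N *m x); nra.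
Qed.

End P2.

Section P3.
Variable R : realType.

Definition fc (k : nat) : R := (k`!%:R)^-1.

Lemma fc_gt0 k : 0 < fc k.
Proof. by rewrite /fc invr_gt0 ltr0n fact_gt0. Qed.

Definition expS {m} (W : 'M[R]_m) N := \sum_(k < N) fc k *: W ^+ k.

Lemma expm_cvg m (W : 'M[R]_m) : mxcvg (expS W) (expm W).
Proof.
move=> i j; rewrite mxE.
set u := fun k => fc k * (W ^+ k) i j.
have -> : (fun N => expS W N i j) = series u.
  apply/funext => N; rewrite seriesEord /= /expS summxE.
  by apply: eq_bigr => k _; rewrite mxE.
have : cvgn (series u).
  apply: normed_cvg.
  apply: (@series_le_cvg R _ (exp_coeff (spnorm W))).
  - by move=> k /=.
  - by move=> k; rewrite /exp_coeff /= mulr_ge0 ?exprn_ge0 ?spnorm_ge0 // invr_ge0.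
  - move=> k; rewrite /u /exp_coeff /= normrM ger0_norm ?(ltW (fc_gt0 _)) //.
    rewrite mulrC /fc ler_wpM2r ?invr_ge0 //.
    by apply: le_trans (spnorm_entry _ _ _) (spnormX _ _).
  - exact: is_cvg_series_exp_coeff.
by [].
Qed.

Lemma expS_tail_eq m (W : 'M[R]_m) N : (2 <= N)%N ->
  expS W N - 1%:M - W = \sum_(2 <= k < N) fc k *: W ^+ k.
Proof.
move=> N2; rewrite /expS -(big_mkord xpredT (fun k => fc k *: W ^+ k)).
rewrite big_ltn ?(leq_trans _ N2) // big_ltn ?(leq_trans _ N2) //.
rewrite /fc /= expr0 expr1 !invr1 !scale1r idmxE.
by rewrite [1 + _]addrC addrK addrC addKr.
Qed.

Lemma geom_sum (x : R) n : (1 - x) * \sum_(0 <= j < n) x ^+ j = 1 - x ^+ n.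
Proof.
elim: n => [|n IH]; first by rewrite big_geq // mulr0 expr0 subrr.
by rewrite big_nat_recr //= mulrDr IH exprS; ring.
Qed.

Lemma fact_ge_pow2 k : (2 ^ k.-1 <= k`!)%N.
Proof.
elim: k => [//|k IH]; rewrite factS /=.
case: k IH => [//|k] IH /=; rewrite expnS.
by apply: leq_mul => //; apply: (leq_trans IH).
Qed.

Lemma tail_bound (w : R) N : 0 <= w -> w <= 3 / 4 ->
  \sum_(2 <= k < N) fc k * w ^+ k <= 4 / 5 * w ^+ 2.
Proof.
move=> w0 w34.
have h1 : forall k, (2 <= k)%N -> fc k * w ^+ k <= w ^+ 2 / 2 * (w / 2) ^+ (k - 2).
  move=> k k2; rewrite /fc.
  have e1 : w ^+ k = w ^+ 2 * w ^+ (k - 2) by rewrite -exprD subnKC.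
  have ek : k.-1 = (k - 2).+1 by case: k k2 {e1} => [|[|k]] // _; rewrite !subSS subn0.
  have e2 : w ^+ 2 / 2 * (w / 2) ^+ (k - 2) = (2 ^ k.-1)%:R^-1 * (w ^+ 2 * w ^+ (k - 2)).
    rewrite ek natrX (exprS (2%:R : R)) expr_div_n.
    have b0 : (2%:R : R) ^+ (k - 2) != 0 by rewrite expf_neq0 // pnatr_eq0.
    move: b0; set b := (2%:R : R) ^+ (k - 2); set a := w ^+ (k - 2) => b0.
    by field.
  rewrite e1 e2 ler_wpM2r ?mulr_ge0 ?exprn_ge0 //.
  rewrite lef_pV2 ?posrE ?ltr0n ?fact_gt0 ?expn_gt0 // ler_nat.
  exact: fact_ge_pow2.
apply: le_trans (_ : \sum_(2 <= k < N) w ^+ 2 / 2 * (w / 2) ^+ (k - 2) <= _).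
  by rewrite big_nat_cond [X in _ <= X]big_nat_cond; apply: ler_sum => k /andP[/andP[k2 _] _]; exact: h1.
case: (leqP N 2) => N2.
  by rewrite big_geq // mulr_ge0 ?exprn_ge0.
rewrite -mulr_sumr.
have -> : \sum_(2 <= k < N) (w / 2) ^+ (k - 2) = \sum_(0 <= j < N - 2) (w / 2) ^+ j.
  have H := big_addn 0 N 2 xpredT (fun k => (w / 2) ^+ (k - 2)).
  rewrite add0n in H; rewrite H; apply: eq_big_nat => j _; by rewrite addnK.
set S := \sum_(0 <= j < N - 2) _.
have hS : (1 - w / 2) * S <= 1.
  by rewrite geom_sum gerDl oppr_le0 exprn_ge0 // divr_ge0.
have S0 : 0 <= S by apply: sumr_ge0 => j _; rewrite exprn_ge0 // divr_ge0.
have := sqr_ge0 w; nra.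
Qed.

Lemma expS_tail_norm m (W : 'M[R]_m) N : (2 <= N)%N -> spnorm W <= 3 / 4 ->
  spnorm (expS W N - 1%:M - W) <= 4 / 5 * spnorm W ^+ 2.
Proof.
move=> N2 w34; rewrite expS_tail_eq //.
apply: le_trans (spnorm_sum _ _ _) _.
apply: le_trans (tail_bound N (spnorm_ge0 W) w34).
apply: ler_sum => k _; apply: le_trans (spnormZ _ _) _.
by rewrite ger0_norm ?(ltW (fc_gt0 _)) // ler_wpM2l ?(ltW (fc_gt0 _)) // spnormX.
Qed.

Lemma expm_tail m (W : 'M[R]_m) x : spnorm W <= 3 / 4 ->
  vnorm ((expm W - 1%:M - W) *m x) <= 4 / 5 * spnorm W ^+ 2 * vnorm x.
Proof.
move=> w34.
have hc : mxcvg (fun N => expS W N - 1%:M - W) (expm W - 1%:M - W).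
  by apply: mxcvgD; [apply: mxcvgD; [exact: expm_cvg | exact: mxcvg_cst] | exact: mxcvg_cst].
apply: (mxcvg_vnorm_le hc (N0 := 2)) => N N2.
apply: le_trans (spnorm_ub _ _) _.
by rewrite ler_wpM2r ?vnorm_ge0 // expS_tail_norm.
Qed.

End P3.

Lemma tri_sum (V : zmodType) (F : nat -> nat -> V) N :
  \sum_(0 <= j < N) \sum_(0 <= k < (N - j)%N) F j k =
  \sum_(0 <= m < N) \sum_(0 <= j < m.+1) F j (m - j)%N.
Proof.
elim: N => [|N IH]; first by rewrite !big_geq.
rewrite (@eq_big_nat _ _ _ 0 N.+1 _ (fun j => \sum_(0 <= k < (N - j)%N) F j k + F j (N - j)%N)); last first.
  by move=> j /andP[_ jN]; rewrite subSn // big_nat_recr.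
rewrite big_split /= big_nat_recr //= subnn [X in _ + X + _]big_geq // addr0 IH.
by rewrite [RHS]big_nat_recr.
Qed.

Lemma sq_decomp (V : zmodType) (F : nat -> nat -> V) N :
  \sum_(0 <= j < N) \sum_(0 <= k < N) F j k =
  \sum_(0 <= m < N) \sum_(0 <= j < m.+1) F j (m - j)%N +
  \sum_(0 <= j < N) \sum_((N - j)%N <= k < N) F j k.
Proof.
rewrite -tri_sum -big_split /=; apply: eq_big_nat => j _.
by apply: big_cat_nat; [exact: leq0n | exact: leq_subr].
Qed.

Section P4.
Variable R : realType.

Lemma coef_binom (a b : R) m :
  \sum_(0 <= j < m.+1) fc R j * fc R (m - j)%N * (a ^+ j * b ^+ (m - j)%N) =
  fc R m * (a + b) ^+ m.
Proof.
rewrite addrC exprDn mulr_sumr big_mkord; apply: eq_bigr => i _.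
have im : (i <= m)%N by rewrite -ltnS.
have h : (m`!%:R : R) = 'C(m, i)%:R * i`!%:R * (m - i)%N`!%:R.
  by rewrite -!natrM -mulnA bin_fact.
have c0 : ('C(m, i)%:R : R) != 0 by rewrite pnatr_eq0 -lt0n bin_gt0.
have f1 : (i`!%:R : R) != 0 by rewrite pnatr_eq0 -lt0n fact_gt0.
have f2 : ((m - i)%N`!%:R : R) != 0 by rewrite pnatr_eq0 -lt0n fact_gt0.
rewrite /fc h mulr_natr -mulr_natl.
move: c0 f1 f2; set C := ('C(m, i)%:R : R); set x := (i`!%:R : R);
  set y := ((m - i)%N`!%:R : R); set p := a ^+ i; set q := b ^+ (m - i)%N => c0 f1 f2.
by field; rewrite c0 f1 f2.
Qed.

Lemma trmxX m (W : 'M[R]_m) k : (W ^+ k)^T = W^T ^+ k.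
Proof.
elim: k => [|k IH]; first by rewrite !expr0 -idmxE trmx1.
by rewrite exprS exprSr -!mulmxE trmx_mul IH.
Qed.

Lemma expS_tr m (W : 'M[R]_m) N : (expS W N)^T = expS W^T N.
Proof.
apply/matrixP => i j; rewrite !mxE !summxE; apply: eq_bigr => k _.
by rewrite !mxE -trmxX mxE.
Qed.

Lemma exprNW m (W : 'M[R]_m) j : (- W) ^+ j = ((-1) ^+ j) *: W ^+ j.
Proof.
elim: j => [|j IH]; first by rewrite !expr0 scale1r.
by rewrite !exprS IH -!mulmxE mulNmx scalemxAr mulN1r scaleNr mulmxN.
Qed.

Lemma scalemxM m (a b : R) (A B : 'M[R]_m) : (a *: A) *m (b *: B) = (a * b) *: (A *m B).
Proof. by rewrite -scalemxAl -scalemxAr scalerA. Qed.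

Definition Gt m (W : 'M[R]_m) (j k : nat) : 'M[R]_m :=
  (fc R j * fc R k * (-1) ^+ j) *: W ^+ (j + k).

Lemma expS_prod m (W : 'M[R]_m) N :
  expS (- W) N *m expS W N = \sum_(0 <= j < N) \sum_(0 <= k < N) Gt W j k.
Proof.
rewrite /expS big_mkord mulmx_suml; apply: eq_bigr => j _.
rewrite big_mkord mulmx_sumr; apply: eq_bigr => k _.
rewrite /Gt exprNW scalerA scalemxM mulmxE exprD.
by congr (_ *: _); ring.
Qed.

Lemma tri_one m (W : 'M[R]_m) N : (0 < N)%N ->
  \sum_(0 <= m0 < N) \sum_(0 <= j < m0.+1) Gt W j (m0 - j)%N = 1.
Proof.
move=> N0.
have h : forall m0, \sum_(0 <= j < m0.+1) Gt W j (m0 - j)%N = (fc R m0 * 0 ^+ m0) *: W ^+ m0.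
  move=> m0; have e : (0 : R) = -1 + 1 by rewrite addNr.
  rewrite [in RHS]e -coef_binom scaler_suml; apply: eq_big_nat => j /andP[_ jm].
  by move: jm; rewrite ltnS => jm; rewrite /Gt subnKC // expr1n mulr1.
rewrite (eq_big_nat _ _ (fun m0 _ => h m0)) big_ltn // expr0 mulr1 /fc /= invr1 scale1r.
rewrite big1_seq ?addr0 // => i /andP[_]; rewrite mem_index_iota => /andP[i1 _].
by rewrite expr0n (gtn_eqF i1) mulr0 scale0r.
Qed.

End P4.

Section P5.
Variable R : realType.

Definition restS (w : R) N :=
  \sum_(0 <= j < N) \sum_((N - j)%N <= k < N) (fc R j * fc R k * w ^+ (j + k)).

Lemma rest_norm m (W : 'M[R]_m) N :
  spnorm (\sum_(0 <= j < N) \sum_((N - j)%N <= k < N) Gt W j k) <= restS (spnorm W) N.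
Proof.
apply: le_trans (spnorm_sum _ _ _) _; apply: ler_sum => j _.
apply: le_trans (spnorm_sum _ _ _) _; apply: ler_sum => k _.
apply: le_trans (spnormZ _ _) _.
rewrite normrM normrX normrN normr1 expr1n mulr1.
rewrite ger0_norm ?mulr_ge0 ?(ltW (fc_gt0 _ _)) //.
by rewrite ler_wpM2l ?mulr_ge0 ?(ltW (fc_gt0 _ _)) // spnormX.
Qed.

Lemma restS_eq (w : R) N :
  restS w N = series (exp_coeff w) N ^+ 2 - series (exp_coeff (w + w)) N.
Proof.
have hP : series (exp_coeff w) N ^+ 2 =
    \sum_(0 <= j < N) \sum_(0 <= k < N) (fc R j * fc R k * w ^+ (j + k)).
  rewrite seriesEnat /= expr2 mulr_suml; apply: eq_bigr => j _.
  rewrite mulr_sumr; apply: eq_bigr => k _.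
  by rewrite /exp_coeff /= /fc exprD; ring.
rewrite hP sq_decomp seriesEnat /=.
have -> : \sum_(0 <= m0 < N) \sum_(0 <= j < m0.+1)
      (fc R j * fc R (m0 - j)%N * w ^+ (j + (m0 - j))%N) =
    \sum_(0 <= k < N) exp_coeff (w + w) k.
  apply: eq_bigr => m0 _; rewrite /exp_coeff /= -[_ / _]mulrC -coef_binom.
  apply: eq_big_nat => j /andP[_ jm]; move: jm; rewrite ltnS => jm.
  by rewrite -exprD subnKC.
by rewrite addrAC subrr add0r.
Qed.

Lemma restS_cvg (w : R) : restS w @ \oo --> 0.
Proof.
have -> : restS w = (fun N => series (exp_coeff w) N ^+ 2 - series (exp_coeff (w + w)) N).
  by apply/funext => N; rewrite restS_eq.
have h1 : series (exp_coeff w) @ \oo --> expR w := is_cvg_series_exp_coeff w.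
have h2 : series (exp_coeff (w + w)) @ \oo --> expR (w + w) := is_cvg_series_exp_coeff (w + w).
have -> : (0 : R) = expR w * expR w - expR (w + w) by rewrite expRD subrr.
apply: cvgB => //.
have -> : (fun N => series (exp_coeff w) N ^+ 2) = series (exp_coeff w) \* series (exp_coeff w).
  by apply/funext => N; rewrite /= expr2.
exact: cvgM.
Qed.

Lemma expS_prod_rest m (W : 'M[R]_m) N : (0 < N)%N ->
  expS (- W) N *m expS W N - 1 =
  \sum_(0 <= j < N) \sum_((N - j)%N <= k < N) Gt W j k.
Proof.
by move=> N0; rewrite expS_prod sq_decomp tri_one // addrAC subrr add0r.
Qed.

Lemma expS_orth_cvg m (W : 'M[R]_m) : mxcvg (fun N => expS (- W) N *m expS W N) 1.
Proof.
move=> i j.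
have hD : (fun N => (expS (- W) N *m expS W N - 1) i j) @ \oo --> (0 : R).
  apply: (@squeeze_cvgr _ _ _ _ (fun N => - restS (spnorm W) N) (restS (spnorm W))).
  - exists 1%N => // N /= N1.
    have h := spnorm_entry (expS (- W) N *m expS W N - 1) i j.
    rewrite expS_prod_rest // in h.
    have {}h := le_trans h (rest_norm W N).
    by rewrite expS_prod_rest // -ler_norml.
  - by rewrite -oppr0; apply: cvgN; exact: restS_cvg.
  - exact: restS_cvg.
have -> : (fun N => (expS (- W) N *m expS W N) i j) =
    (fun N => (expS (- W) N *m expS W N - 1) i j) + (fun=> (1 : 'M[R]_m) i j).
  apply/funext => N /=.
  by rewrite -[in LHS](subrK (1 : 'M[R]_m) (expS (- W) N *m expS W N)) [in LHS]mxE.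
rewrite -[X in _ --> X]add0r; apply: cvgD => //; exact: cvg_cst.
Qed.

Lemma expm_orth m (W : 'M[R]_m) : W^T = - W -> (expm W)^T *m expm W = 1%:M.
Proof.
move=> hW.
have h1 := mxcvgM (mxcvg_tr (expm_cvg (W:=W))) (expm_cvg (W:=W)).
have h2 : mxcvg (fun N => (expS W N)^T *m expS W N) 1.
  move=> i j.
  have e : (fun N => ((expS W N)^T *m expS W N) i j) = (fun N => (expS (- W) N *m expS W N) i j).
    by apply/funext => N; rewrite expS_tr hW.
  rewrite /= e; exact: (@expS_orth_cvg m W i j).
by rewrite idmxE; exact: (mxcvg_uniq h1 h2).
Qed.

End P5.

Section P6.
Variable R : realType.

Definition qf {n} (A : 'M[R]_n) (x : 'cV[R]_n) : R := (x^T *m A *m x) 0 0.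

Lemma qf_dot n (A : 'M[R]_n) x : qf A x = dotv x (A *m x).
Proof. by rewrite /qf dotv_tr mulmxA. Qed.

Lemma vnorm_mul_aux n (A : 'M[R]_n) x : vnorm x * vnorm (A *m x) <= spnorm A * nsq x.
Proof.
apply: le_trans (ler_wpM2l (vnorm_ge0 x) (spnorm_ub A x)) _.
by rewrite -vnorm_sq le_eqVlt; apply/orP; left; apply/eqP; ring.
Qed.

Lemma qf_le n (A : 'M[R]_n) x : `|qf A x| <= spnorm A * nsq x.
Proof.
rewrite qf_dot ler_norml; apply/andP; split.
  rewrite lerNl; have -> : - dotv x (A *m x) = dotv (- x) (A *m x).
    by rewrite /dotv -sumrN; apply: eq_bigr => i _; rewrite [(- x) _ _]mxE mulNr.
  apply: le_trans (dotv_le _ _) _.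
  have -> : vnorm (- x) = vnorm x by rewrite -scaleN1r vnormZ normrN normr1 mul1r.
  exact: vnorm_mul_aux.
apply: le_trans (dotv_le _ _) _; exact: vnorm_mul_aux.
Qed.

Lemma qf0 n (A : 'M[R]_n) : qf A 0 = 0.
Proof. by rewrite /qf mulmx0 mxE. Qed.

Lemma qfZ n (A : 'M[R]_n) a x : qf A (a *: x) = a ^+ 2 * qf A x.
Proof.
rewrite !qf_dot -scalemxAr /dotv mulr_sumr; apply: eq_bigr => i _.
by rewrite !mxE; ring.
Qed.

Lemma dotvZl n (a : R) (u v : 'cV[R]_n) : dotv (a *: u) v = a * dotv u v.
Proof. by rewrite /dotv mulr_sumr; apply: eq_bigr => i _; rewrite mxE mulrA. Qed.

Lemma dotv_sym n (A : 'M[R]_n) x y : A^T = A -> dotv x (A *m y) = dotv y (A *m x).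
Proof.
move=> hA; have t : forall M : 'M[R]_1, M 0 0 = M^T 0 0 by move=> M; rewrite mxE.
by rewrite !dotv_tr [LHS]t !trmx_mul trmxK hA mulmxA.
Qed.

Lemma qfD n (A : 'M[R]_n) x y : A^T = A ->
  qf A (x + y) = qf A x + 2 * dotv y (A *m x) + qf A y.
Proof.
move=> hA; rewrite !qf_dot mulmxDr.
have e : dotv (x + y) (A *m x + A *m y) =
    dotv x (A *m x) + dotv x (A *m y) + dotv y (A *m x) + dotv y (A *m y).
  rewrite /dotv -!big_split /=; apply: eq_bigr => i _; rewrite !mxE; ring.
rewrite e dotv_sym //; ring.
Qed.

Lemma discr (a b c : R) : (forall t, 0 <= a + 2 * b * t + c * t ^+ 2) -> b ^+ 2 <= a * c.
Proof.
move=> H; have c0 : 0 <= c.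
  have [//|cn] := leP 0 c.
  set d := - c; have d0 : 0 < d by rewrite /d oppr_gt0.
  set k := `|a| + 2 * `|b| + 1.
  have k0 : 0 <= k by rewrite /k addr_ge0 // addr_ge0 // mulr_ge0.
  set t := k / d + 1.
  have t1 : 1 <= t by rewrite /t lerDr divr_ge0 // ltW.
  have dt : d * t = k + d by rewrite /t mulrDr mulr1 mulrCA mulfV ?gt_eqF // mulr1.
  have ct : c * t ^+ 2 = - ((k + d) * t) by rewrite -dt /d; ring.
  have hb : b * t <= `|b| * t by rewrite ler_wpM2r ?ler_norm // (le_trans ler01 t1).
  have ha : `|a| <= `|a| * t by rewrite ler_peMr.
  have ha' := ler_norm a.
  have := H t; rewrite ct /k; nra.
have a0 : 0 <= a by have := H 0; rewrite mulr0 expr0n /= mulr0 !addr0.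
have [cp|] := ltrP 0 c.
  have := H (- b / c).
  have e : a + 2 * b * (- b / c) + c * (- b / c) ^+ 2 = a - b ^+ 2 / c by field; rewrite gt_eqF.
  rewrite e subr_ge0 ler_pdivrMr //.
move=> cle; have c00 : c = 0 by apply/eqP; rewrite eq_le cle c0.
subst c; rewrite mulr0.
have [b0|bn] := eqVneq b 0; first by rewrite b0 expr0n.
have := H (- (a + 1) / (2 * b)).
have e : a + 2 * b * (- (a + 1) / (2 * b)) + 0 * (- (a + 1) / (2 * b)) ^+ 2 = -1.
  by field; rewrite bn.
by rewrite e; lra.
Qed.

Lemma semi_CS n (B : 'M[R]_n) x y : B^T = B -> (forall z, 0 <= qf B z) ->
  dotv y (B *m x) ^+ 2 <= qf B y * qf B x.
Proof.
move=> hB hpos; rewrite mulrC; apply: discr => t.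
have := hpos (x + t *: y); rewrite qfD // qfZ dotvZl; lra.
Qed.

Definition Rset {n} (A : 'M[R]_n) := [set qf A x | x in [set x : 'cV[R]_n | vnorm x = 1]].

Lemma unit_vec n : (0 < n)%N -> exists x : 'cV[R]_n, vnorm x = 1.
Proof.
move=> n0; exists (delta_mx (Ordinal n0) 0).
rewrite vnormE /nsq (bigD1 (Ordinal n0)) //= big1 ?addr0; last first.
  by move=> k kj; rewrite mxE (negbTE kj) /= expr0n.
by rewrite mxE !eqxx /= expr1n sqrtr1.
Qed.

Lemma vnorm_gt0 n (x : 'cV[R]_n) : x != 0 -> 0 < vnorm x.
Proof.
move=> x0; rewrite lt_def vnorm_ge0 andbT; apply/eqP => /vnorm_eq0 H.
by rewrite H eqxx in x0.
Qed.

Lemma qf_scale_unit n (A : 'M[R]_n) x c :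
  (forall u, vnorm u = 1 -> c <= qf A u) -> c * nsq x <= qf A x.
Proof.
move=> H; have [->|x0] := eqVneq x 0; first by rewrite nsq0 qf0 mulr0.
have t0 := vnorm_gt0 x0.
have u1 : vnorm ((vnorm x)^-1 *: x) = 1.
  by rewrite vnormZ ger0_norm ?invr_ge0 ?vnorm_ge0 // mulVf // gt_eqF.
have := H _ u1; rewrite qfZ -vnorm_sq.
rewrite exprVn ler_pdivlMl ?exprn_gt0 // mulrC //.
Qed.

Lemma qf_scale_unit_ub n (A : 'M[R]_n) x c :
  (forall u, vnorm u = 1 -> qf A u <= c) -> qf A x <= c * nsq x.
Proof.
move=> H; have [->|x0] := eqVneq x 0; first by rewrite nsq0 qf0 mulr0.
have t0 := vnorm_gt0 x0.
have u1 : vnorm ((vnorm x)^-1 *: x) = 1.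
  by rewrite vnormZ ger0_norm ?invr_ge0 ?vnorm_ge0 // mulVf // gt_eqF.
have := H _ u1; rewrite qfZ -vnorm_sq.
rewrite exprVn ler_pdivrMl ?exprn_gt0 // mulrC //.
Qed.

Lemma exists_min_eig n (A : 'M[R]_n) : A^T = A -> (0 < n)%N ->
  exists mu, eigenvalue A mu /\ forall x, mu * nsq x <= qf A x.
Proof.
move=> hA n0.
have lb : has_lbound (Rset A).
  exists (- spnorm A) => _ [x /= x1 <-].
  have := qf_le A x; rewrite -vnorm_sq x1 expr1n mulr1 ler_norml => /andP[] //.
have ne : Rset A !=set0 by have [x x1] := unit_vec n0; exists (qf A x), x.
set mu := inf (Rset A).
have hmu : forall x, mu * nsq x <= qf A x.
  move=> x; apply: qf_scale_unit => u u1; apply: (ge_inf lb); by exists u.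
exists mu; split => //.
set B := A - mu%:M.
have hB : B^T = B by rewrite /B linearB /= tr_scalar_mx hA.
have qfB : forall x, qf B x = qf A x - mu * nsq x.
  move=> x; rewrite !qf_dot /B mulmxBl mul_scalar_mx /dotv /nsq mulr_sumr -sumrB.
  by apply: eq_bigr => i _; rewrite !mxE; ring.
have Bpos : forall x, 0 <= qf B x by move=> x; rewrite qfB subr_ge0.
rewrite /eigenvalue /eigenspace -/B kermx_eq0 row_free_unit; apply/negP => Bu.
have h1 : forall x, nsq (B *m x) <= spnorm B * qf B x.
  move=> x; have := semi_CS x (B *m x) hB Bpos.
  have e : dotv (B *m x) (B *m x) = nsq (B *m x) by rewrite dotv_tr -nsq_tr.
  rewrite e => h.
  have h2 : qf B (B *m x) <= spnorm B * nsq (B *m x).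
    by apply: le_trans (ler_norm _) (qf_le _ _).
  have := nsq_ge0 (B *m x); have := Bpos x; have := spnorm_ge0 B.
  have := Bpos (B *m x).
  move=> p1 p2 p3 p4.
  have [z0|zp] := eqVneq (nsq (B *m x)) 0; first by rewrite z0 mulr_ge0.
  have zp' : 0 < nsq (B *m x) by rewrite lt_def zp p4.
  rewrite -(ler_pM2l zp') -expr2; apply: le_trans h _.
  apply: le_trans (ler_wpM2r p3 h2) _.
  by rewrite le_eqVlt; apply/orP; left; apply/eqP; ring.
set K := spnorm (invmx B) ^+ 2 * spnorm B.
have h3 : forall x, nsq x <= K * qf B x.
  move=> x; have ex : x = invmx B *m (B *m x) by rewrite mulKmx.
  have h4 : vnorm x <= spnorm (invmx B) * vnorm (B *m x) by rewrite {1}ex spnorm_ub.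
  have h5 : nsq x <= spnorm (invmx B) ^+ 2 * nsq (B *m x).
    rewrite -!vnorm_sq; have := vnorm_ge0 x; nra.
  apply: le_trans h5 _; rewrite /K -mulrA ler_wpM2l ?exprn_ge0 ?spnorm_ge0 //.
have [u u1] := @unit_vec n n0.
have Kp : 0 < K.
  have := h3 u; rewrite -vnorm_sq u1 expr1n.
  have := spnorm_ge0 B; have := spnorm_ge0 (invmx B); rewrite /K.
  move=> p1 p2 h; rewrite lt_def mulr_ge0 ?exprn_ge0 // andbT; apply/eqP => K0.
  by rewrite /K K0 mul0r ler10 in h.
have : mu + K^-1 <= mu.
  apply: lb_le_inf => // _ [x /= x1 <-].
  have := h3 x; rewrite qfB -vnorm_sq x1 expr1n mulr1 => h.
  have hk : K^-1 * 1 <= K^-1 * (K * (qf A x - mu)) by rewrite ler_wpM2l // invr_ge0 ltW.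
  rewrite mulr1 mulrA mulVf ?gt_eqF // mul1r in hk; lra.
have hK : 0 < K^-1 by rewrite invr_gt0.
by rewrite gerDl leNgt hK.
Qed.

Lemma eig_vec n (A : 'M[R]_n) a : A^T = A -> eigenvalue A a ->
  exists2 x : 'cV[R]_n, x != 0 & qf A x = a * nsq x.
Proof.
move=> hA /eigenvalueP [v hv v0]; exists v^T.
  by apply: contra v0 => /eqP h; apply/eqP; rewrite -[v]trmxK h linear0.
have : A *m v^T = a *: v^T by rewrite -hA -trmx_mul hv linearZ.
by rewrite /qf -mulmxA => ->; rewrite -scalemxAr mxE -nsq_tr.
Qed.

Lemma lambda_min_spec n (A : 'M[R]_n) : A^T = A -> (0 < n)%N ->
  eigenvalue A (lambda_min A) /\ forall x, lambda_min A * nsq x <= qf A x.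
Proof.
move=> hA n0; have [mu [emu hmu]] := exists_min_eig hA n0.
have -> : lambda_min A = mu; last by [].
have lb : forall a, eigenvalue A a -> mu <= a.
  move=> a /(eig_vec hA) [x x0 hx].
  have := hmu x; rewrite hx ler_pM2r // lt_def nsq_ge0 andbT.
  by apply/eqP => /nsq_eq0 h; rewrite h eqxx in x0.
apply/eqP; rewrite eq_le; apply/andP; split.
  by apply: (ge_inf _ emu); exists mu.
by apply: lb_le_inf; [exists mu | move=> a /lb].
Qed.

Lemma eig_opp n (A : 'M[R]_n) b : eigenvalue (- A) b -> eigenvalue A (- b).
Proof.
move=> /eigenvalueP [v hv v0]; apply/eigenvalueP; exists v => //.
by rewrite scaleNr -hv mulmxN opprK.
Qed.

Lemma eig_opp' n (A : 'M[R]_n) b : eigenvalue A b -> eigenvalue (- A) (- b).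
Proof. by move=> h; apply: eig_opp; rewrite opprK. Qed.

Lemma lambda_max_spec n (A : 'M[R]_n) : A^T = A -> (0 < n)%N ->
  eigenvalue A (lambda_max A) /\ forall x, qf A x <= lambda_max A * nsq x.
Proof.
move=> hA n0.
have hA' : (- A)^T = - A by rewrite linearN /= hA.
have [mu [emu hmu]] := exists_min_eig hA' n0.
have qfN : forall x, qf (- A) x = - qf A x.
  by move=> x; rewrite /qf mulmxN mulNmx mxE.
have -> : lambda_max A = - mu.
  have ub : forall a, eigenvalue A a -> a <= - mu.
    move=> a /eig_opp' /(eig_vec hA') [x x0 hx].
    have := hmu x; rewrite hx ler_pM2r; last first.
      rewrite lt_def nsq_ge0 andbT; apply/eqP => /nsq_eq0 h; by rewrite h eqxx in x0.
    by rewrite lerNr.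
  apply/eqP; rewrite eq_le; apply/andP; split.
    by apply: ge_sup; [exists (- mu); exact: eig_opp | move=> a /ub].
  by apply: (ub_le_sup _ (eig_opp emu)); exists (- mu) => a /ub.
split; first exact: eig_opp.
move=> x; have h := hmu x; rewrite qfN in h; by rewrite mulNr lerNr.
Qed.

End P6.

Section P7.
Variable R : realType.

Definition fdot {m n} (A B : 'M[R]_(m, n)) : R := \sum_i \sum_j A i j * B i j.

Lemma fdotD m n (A B C : 'M[R]_(m, n)) : fdot A (B + C) = fdot A B + fdot A C.
Proof.
rewrite /fdot -big_split /=; apply: eq_bigr => i _.
by rewrite -big_split /=; apply: eq_bigr => j _; rewrite mxE mulrDr.
Qed.

Lemma fdotN m n (A B : 'M[R]_(m, n)) : fdot A (- B) = - fdot A B.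
Proof.
rewrite /fdot -sumrN; apply: eq_bigr => i _.
by rewrite -sumrN; apply: eq_bigr => j _; rewrite mxE mulrN.
Qed.

Lemma frob2_fdot m n (A : 'M[R]_(m, n)) : frob2 A = fdot A A.
Proof. by apply: eq_bigr => i _; apply: eq_bigr => j _; rewrite expr2. Qed.

Lemma fdot_CS m n (A B : 'M[R]_(m, n)) :
  fdot A B <= Num.sqrt (frob2 A) * Num.sqrt (frob2 B).
Proof.
apply: le_sq; first by rewrite mulr_ge0 ?sqrtr_ge0.
rewrite exprMn !sqr_sqrtr ?frob2_ge0 // /fdot /frob2.
rewrite !(pair_big xpredT xpredT) /=.
exact: (CS (fun p : 'I_m * 'I_n => A p.1 p.2) (fun p => B p.1 p.2)).
Qed.

Lemma frob2_row m n (A : 'M[R]_(m, n)) : frob2 A = \sum_i nsq (row i A)^T.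
Proof. by apply: eq_bigr => i _; apply: eq_bigr => j _; rewrite !mxE. Qed.

Lemma frob2_col m n (A : 'M[R]_(m, n)) : frob2 A = \sum_j nsq (col j A).
Proof.
rewrite /frob2 exchange_big /=; apply: eq_bigr => j _; apply: eq_bigr => i _.
by rewrite !mxE.
Qed.

Lemma frob2_tr m n (A : 'M[R]_(m, n)) : frob2 A^T = frob2 A.
Proof.
rewrite /frob2 exchange_big /=; apply: eq_bigr => j _; apply: eq_bigr => i _.
by rewrite !mxE.
Qed.

Lemma nsq_col_le m n (A : 'M[R]_(m, n)) j : nsq (col j A) <= spnorm A ^+ 2.
Proof.
rewrite -vnorm_sq colE.
suff h : vnorm (A *m delta_mx j 0) <= spnorm A.
  by have := vnorm_ge0 (A *m delta_mx j 0); nra.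
have x1 : vnorm (delta_mx j 0 : 'cV[R]_n) = 1.
  rewrite vnormE /nsq (bigD1 j) //= big1 ?addr0; last first.
    by move=> k kj; rewrite mxE (negbTE kj) /= expr0n.
  by rewrite mxE !eqxx /= expr1n sqrtr1.
by rewrite -[spnorm A]mulr1 -x1 spnorm_ub.
Qed.

Lemma frob2_le m n (A : 'M[R]_(m, n)) : frob2 A <= (minn m n)%:R * spnorm A ^+ 2.
Proof.
have h1 : frob2 A <= n%:R * spnorm A ^+ 2.
  rewrite frob2_col -[n in n%:R]card_ord -sum1_card natr_sum mulr_suml.
  by apply: ler_sum => j _; rewrite mul1r nsq_col_le.
have h2 : frob2 A <= m%:R * spnorm A ^+ 2.
  rewrite -frob2_tr -spnorm_tr frob2_col -[m in m%:R]card_ord -sum1_card natr_sum mulr_suml.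
  by apply: ler_sum => j _; rewrite mul1r nsq_col_le.
by case: (leqP m n) => mn.
Qed.

Lemma spnorm_frob m n (A : 'M[R]_(m, n)) : spnorm A <= Num.sqrt (frob2 A).
Proof.
apply: spnorm_le; first exact: sqrtr_ge0.
move=> x; rewrite !vnormE -sqrtrM ?frob2_ge0 // ler_sqrt ?mulr_ge0 ?frob2_ge0 ?nsq_ge0 //.
exact: nsq_mul_frob.
Qed.

Lemma fdot_row s r (W : 'M[R]_(s, r)) (X : 'M[R]_r) : X^T = X ->
  fdot W (W *m X) = \sum_i qf X (row i W)^T.
Proof.
move=> hX; apply: eq_bigr => i _; rewrite qf_dot /dotv; apply: eq_bigr => j _.
rewrite !mxE; congr (_ * _); apply: eq_bigr => k _.
have e : X j k = X k j by rewrite -{1}hX mxE.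
by rewrite e !mxE mulrC.
Qed.

Lemma fdot_col s r (W : 'M[R]_(s, r)) (Y : 'M[R]_s) :
  fdot W (Y *m W) = \sum_j qf Y (col j W).
Proof.
rewrite /fdot exchange_big /=; apply: eq_bigr => j _; rewrite qf_dot /dotv.
apply: eq_bigr => i _; rewrite !mxE; congr (_ * _); apply: eq_bigr => k _.
by rewrite !mxE.
Qed.

Definition sylf s r (X : 'M[R]_r) (Y : 'M[R]_s) (W : 'M[R]_(s, r)) := W *m X + (- Y) *m W.

Lemma sylf_inj s r (X : 'M[R]_r) (Y : 'M[R]_s) W :
  posdef X -> negdef Y -> sylf X Y W = 0 -> W = 0.
Proof.
move=> [hX pX] [hY nY] h.
have e : fdot W (W *m X) = fdot W (Y *m W).
  by move: h; rewrite /sylf mulNmx => /eqP; rewrite subr_eq0 => /eqP ->.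
rewrite fdot_row // fdot_col in e.
have ge : forall i, 0 <= qf X (row i W)^T.
  move=> i; have [->|n0] := eqVneq (row i W)^T 0; first by rewrite qf0.
  by apply: ltW; exact: pX.
have le : forall j, qf Y (col j W) <= 0.
  move=> j; have [->|n0] := eqVneq (col j W) 0; first by rewrite qf0.
  by apply: ltW; exact: nY.
have z : \sum_i qf X (row i W)^T = 0.
  apply/eqP; rewrite eq_le; apply/andP; split; last by apply: sumr_ge0 => i _; exact: ge.
  by rewrite e; apply: sumr_le0 => j _; exact: le.
apply/row_matrixP => i; rewrite linear0.
have qi : qf X (row i W)^T = 0.
  by move/psumr_eq0P: z => /(_ (fun k _ => ge k)) /(_ i isT).
apply/eqP; apply: contraT => ni.
have ni' : (row i W)^T != 0.
  by apply: contra ni => /eqP hh; rewrite -[row i W]trmxK hh linear0.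
by have := pX _ ni'; rewrite /qf in qi; rewrite qi ltxx.
Qed.

Lemma sylf_lin s r (X : 'M[R]_r) (Y : 'M[R]_s) W1 W2 :
  sylf X Y W1 - sylf X Y W2 = sylf X Y (W1 - W2).
Proof.
rewrite /sylf mulmxBl mulmxBr.
move: (W1 *m X) (W2 *m X) ((- Y) *m W1) ((- Y) *m W2) => a b c d.
by rewrite opprD addrACA.
Qed.

Lemma sylf_exists s r (X : 'M[R]_r) (Y : 'M[R]_s) C :
  posdef X -> negdef Y -> exists W, sylf X Y W = C.
Proof.
move=> pX nY.
pose M := lin_mx (mulmxr X) + lin_mx (mulmx (- Y)) : 'M[R]_(s * r).
have hM : forall W, mxvec W *m M = mxvec (sylf X Y W).
  by move=> W; rewrite mulmxDr !mul_vec_lin /= linearD.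
have Mu : M \in unitmx.
  rewrite -row_free_unit -kermx_eq0; apply/eqP/row_matrixP => k.
  rewrite linear0; set v := row k (kermx M).
  have hv : v *m M = 0 by rewrite /v -row_mul mulmx_ker linear0.
  have : sylf X Y (vec_mx v) = 0.
    by apply: (can_inj mxvecK); rewrite -hM vec_mxK hv linear0.
  move/(sylf_inj pX nY) => h; by rewrite -[v]vec_mxK h linear0.
exists (vec_mx (mxvec C *m invmx M)).
by apply: (can_inj mxvecK); rewrite -hM vec_mxK mulmxKV.
Qed.

End P7.

Section P8.
Variable R : realType.
Variables r s : nat.

Lemma Wmat_skew (WO : 'M[R]_(s, r)) : (Wmat WO)^T = - Wmat WO.
Proof.
by rewrite /Wmat tr_block_mx opp_block_mx !trmx0 !oppr0 linearN /= trmxK opprK.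
Qed.

Lemma expm_Wmat_orth (WO : 'M[R]_(s, r)) :
  (expm (Wmat WO))^T *m expm (Wmat WO) = 1%:M.
Proof. exact: expm_orth (Wmat_skew WO). Qed.

Lemma step_sym (Z : 'M[R]_(r + s)) WO : symmx Z -> symmx (step Z WO).
Proof.
rewrite /symmx /step => hZ.
by rewrite !trmx_mul trmxK hZ mulmxA.
Qed.

Lemma step_norm (Z : 'M[R]_(r + s)) WO : spnorm (step Z WO) <= spnorm Z.
Proof.
set E := expm (Wmat WO).
have hE : E^T *m E = 1%:M := expm_Wmat_orth WO.
have hE' : E^T^T *m E^T = 1%:M by rewrite trmxK; exact: mulmx1C.
apply: spnorm_le; first exact: spnorm_ge0.
move=> x; rewrite /step -/E -!mulmxA vnorm_orth //.
by rewrite -(vnorm_orth x hE) spnorm_ub.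
Qed.

Lemma Z_block (Z : 'M[R]_(r + s)) : symmx Z ->
  Z = block_mx (ZX Z) (ZO Z)^T (ZO Z) (ZS Z).
Proof.
move=> hZ; have hZ' : Z^T = Z := hZ.
by rewrite /ZX /ZO /ZS trmx_dlsub hZ' submxK.
Qed.

Lemma ZX_sym (Z : 'M[R]_(r + s)) : symmx Z -> (ZX Z)^T = ZX Z.
Proof. by move=> hZ; rewrite /ZX trmx_ulsub hZ. Qed.

Lemma ZS_sym (Z : 'M[R]_(r + s)) : symmx Z -> (ZS Z)^T = ZS Z.
Proof. by move=> hZ; rewrite /ZS trmx_drsub hZ. Qed.

Lemma zid (V : zmodType) (a b c d e f g : V) :
  a + b + c - (d + e + f) + g - a - (b - d) = c - e - f + g.
Proof.
rewrite opprB !opprD !addrA.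
rewrite (ACl (1*8*2*10*9*4*3*5*6*7)%AC) /=.
by rewrite subrr add0r subrr add0r subrr add0r.
Qed.

Lemma one_step (Z : 'M[R]_(r + s)) (W : 'M[R]_(s, r)) :
  symmx Z -> sylv Z W -> spnorm W <= 3 / 4 ->
  [/\ spnorm (ZX (step Z W) - ZX Z) <=
        2 * spnorm (ZO Z) * spnorm W + 16 / 5 * spnorm Z * spnorm W ^+ 2,
      spnorm (ZS (step Z W) - ZS Z) <=
        2 * spnorm (ZO Z) * spnorm W + 16 / 5 * spnorm Z * spnorm W ^+ 2 &
      spnorm (ZO (step Z W)) <= 16 / 5 * spnorm Z * spnorm W ^+ 2].
Proof.
move=> hZ hsyl w34.
have hZ' : Z^T = Z := hZ.
have hX := ZX_sym hZ; have hS := ZS_sym hZ; have hZb := Z_block hZ.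
move: hsyl; rewrite /sylv; move: hZb hX hS.
set X := ZX Z; set S := ZS Z; set O := ZO Z => hZb hX hS hsyl.
set Wm := Wmat W; set E := expm Wm.
have hsk : Wm^T = - Wm := Wmat_skew W.
have hE : E^T *m E = 1%:M := expm_Wmat_orth W.
set w := spnorm W.
have w0 : 0 <= w := spnorm_ge0 W.
have hwm : spnorm Wm <= w := spnorm_Wmat W.
have wm0 : 0 <= spnorm Wm := spnorm_ge0 Wm.
set F := E - (1%:M + Wm).
have hF : spnorm F <= 4 / 5 * w ^+ 2.
  apply: le_trans (_ : 4 / 5 * spnorm Wm ^+ 2 <= _); last first.
    by rewrite ler_wpM2l // ler_pXn2r ?nnegrE.
  apply: spnorm_le; first by rewrite mulr_ge0 ?exprn_ge0.
  move=> x; rewrite /F opprD addrA; apply: expm_tail.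
  exact: le_trans hwm w34.
have f0 : 0 <= spnorm F := spnorm_ge0 F.
have hEn : spnorm E <= 1.
  apply: spnorm_le => // x; by rewrite vnorm_orth // mul1r.
have eE : E = 1%:M + Wm + F by rewrite /F addrC subrK.
have eET : E^T = 1%:M - Wm + F^T by rewrite {1}eE !linearD /= trmx1 hsk.
set Rem := Z *m F - Wm *m Z *m Wm - Wm *m Z *m F + F^T *m Z *m E.
have hRem : step Z W - Z - (Z *m Wm - Wm *m Z) = Rem.
  rewrite /step -/Wm -/E eET !mulmxDl !mulNmx mul1mx.
  have h1 : Z *m E = Z + Z *m Wm + Z *m F by rewrite {1}eE !mulmxDr mulmx1.
  have h2 : Wm *m Z *m E = Wm *m Z + Wm *m Z *m Wm + Wm *m Z *m F.
    by rewrite {1}eE !mulmxDr mulmx1.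
  by rewrite h1 h2 /Rem zid.
set P := O^T *m W + W^T *m O.
set Q := - (O *m W^T + W *m O^T).
have hZc : Z *m Wm - Wm *m Z = block_mx P (- O^T) (- O) Q.
  rewrite hZb /Wm /Wmat !mulmx_block !(mulmx0, mul0mx, addr0, add0r) opp_block_mx add_block_mx.
  congr block_mx.
  - by rewrite mulNmx opprK.
  - have tS : (- S)^T = - S by rewrite linearN /= hS.
    by rewrite -hsyl linearD /= !trmx_mul hX tS !mulmxN !mulNmx opprD !opprK.
  - by rewrite -hsyl opprD mulNmx opprK addrC.
  - by rewrite /Q mulmxN opprD.
have hsum : Z + (Z *m Wm - Wm *m Z) = block_mx (X + P) 0 0 (S + Q).
  by rewrite hZc {1}hZb add_block_mx !subrr.
have hZ2 : step Z W = block_mx (X + P) 0 0 (S + Q) + Rem.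
  rewrite -hRem -hsum.
  have g : forall (V : zmodType) (a b c : V), c = a + b + (c - a - b).
    by move=> V a b c; rewrite -[c - a - b]addrA -opprD [RHS]addrC subrK.
  exact: g.
set z := spnorm Z; have z0 : 0 <= z := spnorm_ge0 Z.
set q := spnorm O; have q0 : 0 <= q := spnorm_ge0 O.
have e0 : 0 <= spnorm E := spnorm_ge0 E.
have hRn : spnorm Rem <= 16 / 5 * z * w ^+ 2.
  have b1 : spnorm (Z *m F) <= z * spnorm F := spnormM _ _.
  have b2 : spnorm (Wm *m Z *m Wm) <= spnorm Wm * z * spnorm Wm.
    apply: le_trans (spnormM _ _) _; rewrite ler_wpM2r //; exact: spnormM.
  have b3 : spnorm (Wm *m Z *m F) <= spnorm Wm * z * spnorm F.
    apply: le_trans (spnormM _ _) _; rewrite ler_wpM2r //; exact: spnormM.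
  have b4 : spnorm (F^T *m Z *m E) <= spnorm F * z * spnorm E.
    apply: le_trans (spnormM _ _) _; rewrite ler_wpM2r //.
    by apply: le_trans (spnormM _ _) _; rewrite spnorm_tr.
  have b0 : spnorm Rem <= z * spnorm F + spnorm Wm * z * spnorm Wm +
      spnorm Wm * z * spnorm F + spnorm F * z * spnorm E.
    rewrite /Rem; apply: le_trans (spnormD _ _) _; rewrite lerD //.
    apply: le_trans (spnormB _ _) _; rewrite lerD //.
    by apply: le_trans (spnormB _ _) _; rewrite lerD.
  apply: le_trans b0 _.
  have a1 : spnorm F * (1 + spnorm Wm + spnorm E) <= 4 / 5 * w ^+ 2 * (11 / 4).
    apply: ler_pM => //; first by rewrite addr_ge0 // addr_ge0.
    have : spnorm Wm <= 3 / 4 by apply: le_trans hwm w34.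
    lra.
  have a2 : spnorm Wm ^+ 2 <= w ^+ 2 by rewrite ler_pXn2r ?nnegrE.
  have := ler_wpM2l z0 (lerD a1 a2).
  set f := spnorm F; set m := spnorm Wm; set e := spnorm E.
  move=> h; apply: le_trans (_ : z * (f * (1 + m + e) + m ^+ 2) <= _).
    by rewrite le_eqVlt; apply/orP; left; apply/eqP; ring.
  by apply: le_trans h _; rewrite le_eqVlt; apply/orP; left; apply/eqP; field.
have hP : spnorm P <= 2 * q * w.
  apply: le_trans (spnormD _ _) _.
  have := spnormM O^T W; have := spnormM W^T O; rewrite !spnorm_tr -/q -/w.
  move=> h1 h2; lra.
have hQ : spnorm Q <= 2 * q * w.
  rewrite /Q spnormN; apply: le_trans (spnormD _ _) _.
  have := spnormM O W^T; have := spnormM W O^T; rewrite !spnorm_tr -/q -/w.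
  move=> h1 h2; lra.
have hul : spnorm (ulsubmx Rem) <= spnorm Rem := spnorm_ul Rem.
have hdr : spnorm (drsubmx Rem) <= spnorm Rem := spnorm_dr Rem.
have hdl : spnorm (dlsubmx Rem) <= spnorm Rem := spnorm_dl Rem.
rewrite hZ2 -[Rem]submxK add_block_mx /ZX /ZS /ZO block_mxKul block_mxKdr block_mxKdl.
rewrite add0r -/X -/S.
have g2 : forall (V : zmodType) (a b c : V), a + b + c - a = b + c.
  by move=> V a b c; rewrite (ACl (1*4*2*3)%AC) /= subrr add0r.
split.
- rewrite g2; apply: le_trans (spnormD _ _) _.
  by apply: lerD => //; apply: le_trans hul hRn.
- rewrite g2; apply: le_trans (spnormD _ _) _.
  by apply: lerD => //; apply: le_trans hdr hRn.
- by apply: le_trans hdl hRn.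
Qed.

End P8.

Section P9.
Variable R : realType.
Variables r s : nat.

Lemma sylv_bound (Z : 'M[R]_(r + s)) (W : 'M[R]_(s, r)) :
  symmx Z -> posdef (ZX Z) -> negdef (ZS Z) -> sylv Z W ->
  0 <= etaZ Z /\ spnorm W <= etaZ Z * spnorm (ZO Z).
Proof.
move=> hZ pX nS hsyl.
have hX := ZX_sym hZ; have hS := ZS_sym hZ.
move: hsyl pX nS hX hS; rewrite /sylv /etaZ.
set X := ZX Z; set S := ZS Z; set O := ZO Z => hsyl pX nS hX hS.
have q0 : 0 <= spnorm O := spnorm_ge0 O.
have [rs0|] := boolP ((r == 0)%N || (s == 0)%N).
  have m0 : minn r s = 0%N by case/orP: rs0 => /eqP ->; rewrite ?min0n ?minn0.
  have W0 : W = 0.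
    apply/matrixP => i j; rewrite mxE; case/orP: rs0 => /eqP e.
      by exfalso; have : (nat_of_ord j < 0)%N by rewrite -e ltn_ord.
    by exfalso; have : (nat_of_ord i < 0)%N by rewrite -e ltn_ord.
  by rewrite m0 sqrtr0 !mul0r W0 spnorm0.
rewrite negb_or -!lt0n => /andP[r0 s0].
have [eA hA] := lambda_min_spec hX r0.
have [eB hB] := lambda_max_spec hS s0.
set a := lambda_min X; set b := lambda_max S.
have a0 : 0 < a.
  have [x x0 hx] := eig_vec hX eA; have := pX.2 x x0; rewrite -/(qf X x) hx.
  rewrite pmulr_lgt0 // lt_def nsq_ge0 andbT; apply/eqP => /nsq_eq0 h.
  by rewrite h eqxx in x0.
have b0 : b < 0.
  have [x x0 hx] := eig_vec hS eB; have := nS.2 x x0; rewrite -/(qf S x) hx.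
  rewrite pmulr_llt0 // lt_def nsq_ge0 andbT; apply/eqP => /nsq_eq0 h.
  by rewrite h eqxx in x0.
set d := a - b; have d0 : 0 < d by rewrite /d subr_gt0 (lt_trans b0 a0).
set F := frob2 W; set G := frob2 O.
have F0 : 0 <= F := frob2_ge0 W.
have key : d * F <= fdot W O.
  rewrite -hsyl fdotD mulNmx fdotN fdot_row // fdot_col.
  have h1 : a * F <= \sum_i qf X (row i W)^T.
    by rewrite /F frob2_row mulr_sumr; apply: ler_sum => i _; exact: hA.
  have h2 : \sum_j qf S (col j W) <= b * F.
    by rewrite /F frob2_col mulr_sumr; apply: ler_sum => j _; exact: hB.
  by rewrite /d mulrBl; apply: lerB.
have hCS := fdot_CS W O; rewrite -/F -/G in hCS.
have sF : Num.sqrt F <= Num.sqrt G / d.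
  rewrite ler_pdivlMr //.
  have sF0 : 0 <= Num.sqrt F := sqrtr_ge0 F.
  have sG0 : 0 <= Num.sqrt G := sqrtr_ge0 G.
  have eF : F = Num.sqrt F ^+ 2 by rewrite sqr_sqrtr.
  have [z|nz] := eqVneq (Num.sqrt F) 0; first by rewrite z mul0r.
  have pF : 0 < Num.sqrt F by rewrite lt_def nz sF0.
  rewrite -(ler_pM2l pF); apply: le_trans (le_trans key hCS).
  move: eF; set t := Num.sqrt F => eF; rewrite [X in _ <= d * X]eF.
  by rewrite le_eqVlt; apply/orP; left; apply/eqP; ring.
have hG : Num.sqrt G <= Num.sqrt (minn r s)%:R * spnorm O.
  rewrite -(ger0_norm q0) -sqrtr_sqr -sqrtrM ?ler0n //.
  by rewrite ler_sqrt ?mulr_ge0 ?ler0n ?exprn_ge0 // minnC; exact: frob2_le.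
split; first by rewrite divr_ge0 ?sqrtr_ge0 // ltW.
apply: le_trans (spnorm_frob W) _; apply: le_trans sF _.
rewrite mulrAC ler_pM2r ?invr_gt0 //.
Qed.

End P9.

Local Open Scope ring_scope.

Theorem lemma9 (R : realType) (r s : nat) (lam : 'I_(r + s) -> R)
    (H : 'M[R]_(r + s)) (Zs : nat -> 'M[R]_(r + s)) (WOs : nat -> 'M[R]_(s, r))
    (l : nat) :
  (forall i j : 'I_(r + s), (i <= j)%N -> lam j <= lam i) ->
  (forall i : 'I_(r + s), (i < r)%N -> 0 < lam i) ->
  (forall i : 'I_(r + s), (r <= i)%N -> lam i < 0) ->
  symmx H ->
  Zs 0%N = diag_mx (\row_i lam i) + H ->
  (forall k, (k < l)%N -> sylv (Zs k) (WOs k) /\ Zs k.+1 = step (Zs k) (WOs k)) ->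
  posdef (ZX (Zs l)) ->
  negdef (ZS (Zs l)) ->
  spnorm (ZO (Zs l)) <= 3 / (4 * etaZ (Zs l)) ->
  (exists! W : 'M[R]_(s, r), sylv (Zs l) W) /\
  (forall W : 'M[R]_(s, r), sylv (Zs l) W ->
     spnorm W <= etaZ (Zs l) * spnorm (ZO (Zs l)) /\
     let Z' := step (Zs l) W in
     let e := etaZ (Zs l) in
     let z0 := spnorm (Zs 0%N) in
     Num.max (spnorm (ZX Z' - ZX (Zs l)))
       (Num.max (spnorm (ZS Z' - ZS (Zs l))) (spnorm (ZO Z')))
     <= (4 / 9 * e ^+ 4 * z0 ^+ 3 + 4 / 3 * e ^+ 3 * z0 ^+ 2
         + 13 / 3 * e ^+ 2 * z0 + 4 * e) * spnorm (ZO (Zs l)) ^+ 2).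
Proof.
move=> _ _ _ hH hZ0 hsteps pX nS hq.
have inv : forall k, (k <= l)%N -> symmx (Zs k) /\ spnorm (Zs k) <= spnorm (Zs 0%N).
  elim=> [|k IH] kl.
    split => //; rewrite /symmx hZ0 linearD /= tr_diag_mx.
    by have hH' : H^T = H := hH; rewrite hH'.
  have [IH1 IH2] := IH (ltnW kl).
  have [_ ->] := hsteps k kl.
  split; first exact: step_sym.
  exact: le_trans (step_norm _ _) IH2.
have [hZ hzn] := inv l (leqnn l).
set Z := Zs l in hZ hzn pX nS hq *.
split.
  have [W0 hW0] := sylf_exists (ZO Z) pX nS.
  exists W0; split; first exact: hW0.
  move=> W' hW'; apply/eqP; rewrite -subr_eq0; apply/eqP.
  apply: (sylf_inj pX nS); rewrite -sylf_lin.
  have e' : sylf (ZX Z) (ZS Z) W' = ZO Z := hW'.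
  by rewrite hW0 e' subrr.
move=> W hW.
have [e0 hw] := sylv_bound hZ pX nS hW.
split => //.
cbv zeta.
set e := etaZ Z; set q := spnorm (ZO Z); set z0 := spnorm (Zs 0%N).
set w := spnorm W.
have q0 : 0 <= q := spnorm_ge0 _.
have w0 : 0 <= w := spnorm_ge0 _.
have z00 : 0 <= z0 := spnorm_ge0 _.
have eq34 : e * q <= 3 / 4.
  have [->|en] := eqVneq e 0; first by rewrite mul0r.
  have ep : 0 < e by rewrite lt_def en e0.
  move: hq; rewrite -/e -/q => hq.
  apply: le_trans (ler_wpM2l (ltW ep) hq) _.
  by rewrite le_eqVlt; apply/orP; left; apply/eqP; field.
have w34 : w <= 3 / 4 := le_trans hw eq34.
have [h1 h2 h3] := one_step hZ hW w34.
rewrite -/q -/w in h1 h2 h3.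
have hB : 2 * q * w + 16 / 5 * spnorm Z * w ^+ 2 <= 2 * e * q ^+ 2 + 16 / 5 * z0 * e ^+ 2 * q ^+ 2.
  have a1 : 2 * q * w <= 2 * q * (e * q) by rewrite ler_wpM2l // mulr_ge0.
  have a2 : w ^+ 2 <= (e * q) ^+ 2 by have hw' : w <= e * q := hw; have := mulr_ge0 e0 q0; nra.
  have a3 : spnorm Z * w ^+ 2 <= z0 * (e * q) ^+ 2.
    by apply: ler_pM => //; [exact: spnorm_ge0 | exact: exprn_ge0].
  have a4 : 16 / 5 * (spnorm Z * w ^+ 2) <= 16 / 5 * (z0 * (e * q) ^+ 2).
    by rewrite ler_wpM2l.
  apply: (le_trans (y := 2 * q * (e * q) + 16 / 5 * (z0 * (e * q) ^+ 2))).
    by rewrite -[16 / 5 * spnorm Z * w ^+ 2]mulrA; exact: lerD a1 a4.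
  by rewrite le_eqVlt; apply/orP; left; apply/eqP; ring.
have hR : 2 * e * q ^+ 2 + 16 / 5 * z0 * e ^+ 2 * q ^+ 2 <=
    (4 / 9 * e ^+ 4 * z0 ^+ 3 + 4 / 3 * e ^+ 3 * z0 ^+ 2 + 13 / 3 * e ^+ 2 * z0 + 4 * e) * q ^+ 2.
  have n49 : (0 : R) <= 4 / 9 by rewrite divr_ge0 ?ler0n.
  have n43 : (0 : R) <= 4 / 3 by rewrite divr_ge0 ?ler0n.
  have P1 : 0 <= (4 / 9 * e ^+ 4 * z0 ^+ 3 + 4 / 3 * e ^+ 3 * z0 ^+ 2) * q ^+ 2.
    have t1 : 0 <= 4 / 9 * e ^+ 4 * z0 ^+ 3 by rewrite mulr_ge0 ?exprn_ge0 // mulr_ge0 ?exprn_ge0.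
    have t2 : 0 <= 4 / 3 * e ^+ 3 * z0 ^+ 2 by rewrite mulr_ge0 ?exprn_ge0 // mulr_ge0 ?exprn_ge0.
    by rewrite mulr_ge0 ?addr_ge0 ?exprn_ge0.
  have C0 : 0 <= e ^+ 2 * z0 * q ^+ 2 by rewrite mulr_ge0 ?exprn_ge0 // mulr_ge0 ?exprn_ge0.
  have D0 : 0 <= e * q ^+ 2 by rewrite mulr_ge0 ?exprn_ge0.
  have E1 : (4 / 9 * e ^+ 4 * z0 ^+ 3 + 4 / 3 * e ^+ 3 * z0 ^+ 2 + 13 / 3 * e ^+ 2 * z0 + 4 * e) * q ^+ 2
     = (4 / 9 * e ^+ 4 * z0 ^+ 3 + 4 / 3 * e ^+ 3 * z0 ^+ 2) * q ^+ 2 + 13 / 3 * (e ^+ 2 * z0 * q ^+ 2)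
       + 4 * (e * q ^+ 2) by ring.
  have E2 : 2 * e * q ^+ 2 + 16 / 5 * z0 * e ^+ 2 * q ^+ 2 =
     16 / 5 * (e ^+ 2 * z0 * q ^+ 2) + 2 * (e * q ^+ 2) by ring.
  rewrite E1 E2; move: P1 C0 D0.
  set A := (_ * q ^+ 2); set C := e ^+ 2 * z0 * q ^+ 2; set D := e * q ^+ 2.
  move=> P1 C0 D0; lra.
have fin := le_trans hB hR.
rewrite !ge_max; apply/andP; split; last (apply/andP; split).
- exact: le_trans h1 fin.
- exact: le_trans h2 fin.
- apply: le_trans h3 _; apply: le_trans _ fin.
  by rewrite lerDr mulr_ge0 // mulr_ge0.
Qed.
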